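(* Let $T^{2,2}$ be the policy with $T^{2,2}_i=\mathcal{R}_{2,2}(T_i^* )$ for every $i\in[n]$. Then $T^{2,2}$ is resource-feasible and $F(T^{2,2})\le\sqrt2\cdot\mathrm{OPT}(P)$.
   Context: An instance consists of integers $n\ge 1$, $D\ge 1$; a joint ordering cost $K_0>0$; for each commodity $i\in[n]$ an ordering cost $K_i>0$ and a holding coefficient $H_i>0$; and resource coefficients $\alpha_{id}\ge 0$. A policy is $T=(T_1,\dots,T_n)\in\mathbb{R}_{>0}^n$; it is resource-feasible if $\sum_{i}\alpha_{id}/T_i\le 1$ for every $d\in[D]$. For $g>0$, $\Delta\ge 0$, $\mathcal{M}_{g,\Delta}=\{0,g,\dots,\lfloor\Delta/g\rfloor g\}$; $N(T,\Delta)=|\bigcup_{i}\mathcal{M}_{T_i,\Delta}|$; $J(T)=K_0\limsup_{\Delta\to\infty}N(T,\Delta)/\Delta$; $F(T)=J(T)+\sum_i(K_i/T_i+H_iT_i)$. The convex relaxation (P) is: minimize $K_0/T_{\min}+\sum_{i\in[n]}(K_i/T_i+H_iT_i)$ over $(T_{\min},T_1,\dots,T_n)$ subject to $T_i\ge T_{\min}\ge0$ for all $i$ and $\sum_i\alpha_{id}/T_i\le1$ for all $d$. $\mathrm{OPT}(P)$ is its optimal value and $T^*=(T^*_{\min},T^*_1,\dots,T^*_n)$ is a fixed optimal solution (with $T^*_{\min}>0$). For integers $m\ge2$, $k\ge1$: $\mathcal{G}_{m,k}=\{m^{p/k}T^*_{\min}:p\in\mathbb{Z}\}$ and $\mathcal{R}_{m,k}(t)=\min\{g\in\mathcal{G}_{m,k}:g>t\}$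 for $t>0$. *)

(* Defs.v *)
From HB Require Import structures.
From mathcomp Require Import all_boot all_order all_algebra.
From mathcomp Require Import all_classical all_reals all_analysis.
From mathcomp Require Import finmap.
Import numFieldTopology.Exports.
Set Implicit Arguments. Unset Strict Implicit. Unset Printing Implicit Defensive.
Import Order.TTheory GRing.Theory Num.Theory.
Local Open Scope classical_set_scope.
Local Open Scope ring_scope.

Section JRP.
Variable R : realType.

Definition mult_set (g Delta : R) : set R :=
  [set x | exists k : nat, x = k%:R * g /\ k%:R * g <= Delta].

Definition Ncount (n : nat) (T : 'I_n -> R) (Delta : R) : nat :=
  (#|` fset_set (\bigcup_i mult_set (T i) Delta) |)%fset.

Definition Jcost (n : nat) (K0 : R) (T : 'I_n -> R) : \bar R :=
  (K0%:E * limf_esup (fun Delta : R => ((Ncount T Delta)%:R / Delta)%:E) +oo%R)%E.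

Definition Fcost (n : nat) (K0 : R) (K H : 'I_n -> R) (T : 'I_n -> R) : \bar R :=
  (Jcost K0 T + (\sum_i (K i / T i + H i * T i))%:E)%E.

Definition resource_feasible (n D : nat) (alpha : 'I_n -> 'I_D -> R)
  (T : 'I_n -> R) : Prop :=
  forall d : 'I_D, \sum_i alpha i d / T i <= 1.

Definition objP (n : nat) (K0 : R) (K H : 'I_n -> R) (tmin : R) (T : 'I_n -> R) : R :=
  K0 / tmin + \sum_i (K i / T i + H i * T i).

(* Feasible points of (P); points with T_min = 0 have objective +oo and
   are therefore excluded. *)
Definition feasibleP (n D : nat) (alpha : 'I_n -> 'I_D -> R)
  (tmin : R) (T : 'I_n -> R) : Prop :=
  0 < tmin /\ (forall i, tmin <= T i) /\ resource_feasible alpha T.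

Definition OPT_P (n D : nat) (K0 : R) (K H : 'I_n -> R)
  (alpha : 'I_n -> 'I_D -> R) : R :=
  inf [set v | exists (tmin : R) (T : 'I_n -> R),
         feasibleP alpha tmin T /\ v = objP K0 K H tmin T].

Definition is_opt_P (n D : nat) (K0 : R) (K H : 'I_n -> R)
  (alpha : 'I_n -> 'I_D -> R) (tmin : R) (T : 'I_n -> R) : Prop :=
  feasibleP alpha tmin T /\
  forall tmin' T', feasibleP alpha tmin' T' ->
    objP K0 K H tmin T <= objP K0 K H tmin' T'.

Definition grid (m k : nat) (tmin : R) : set R :=
  [set g | exists p : int, g = (m%:R `^ (p%:~R / k%:R)) * tmin].

Definition round_up (m k : nat) (tmin t : R) : R :=
  inf [set g | grid m k tmin g /\ t < g].

End JRP.

(* Main.v *)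
Require Import Defs.
From HB Require Import structures.
From mathcomp Require Import all_boot all_order all_algebra.
From mathcomp Require Import all_classical all_reals all_analysis.
From mathcomp Require Import finmap.
From mathcomp Require Import ring lra zify.
Import Order.TTheory GRing.Theory Num.Theory.
Import numFieldTopology.Exports.
Local Open Scope classical_set_scope.
Local Open Scope ring_scope.

Section Helpers.
Variable R : realType.
Local Notation s := (Num.sqrt (2:R)).

Lemma s_gt1 : 1 < s.
Proof. by rewrite -[X in X < _]sqrtr1 ltr_sqrt ?ltr1n //; lra. Qed.

Lemma s_sq : s ^+ 2 = 2.
Proof. by rewrite sqr_sqrtr // ler0n. Qed.

Lemma grid22 (tmin g : R) :
  grid 2 2 tmin g <-> exists z : int, g = s ^ z * tmin.
Proof.
have E (z : int) : (2:R) `^ (z%:~R / 2%:R) = s ^ z.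
  rewrite mulrC powRrM powR12_sqrt ?ler0n // powR_intmul // sqrtr_ge0.
by split => -[z ->]; exists z; rewrite E.
Qed.

Lemma round22 (tmin t : R) : 0 < tmin -> tmin <= t ->
  exists p : nat, (0 < p)%N /\ round_up 2 2 tmin t = s ^+ p * tmin
                  /\ s ^+ p.-1 * tmin <= t /\ t < s ^+ p * tmin.
Proof.
move=> t0 tt.
have exP : exists p, t < s ^+ p * tmin.
  exists (2 * Num.Def.archi_bound (t / tmin))%N.
  rewrite exprM s_sq -ltr_pdivrMr //.
  apply: upper_nthrootP; exact: leqnn.
pose p := ex_minn exP.
have Pp : t < s ^+ p * tmin by rewrite /p; case: ex_minnP.
have minp : forall q, t < s ^+ q * tmin -> (p <= q)%N.
  by rewrite /p; case: ex_minnP.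
have p0 : (0 < p)%N.
  rewrite lt0n; apply/eqP => p0; move: Pp; rewrite p0 expr0 mul1r => /lt_le_trans/(_ tt).
  by rewrite ltxx.
have lep : s ^+ p.-1 * tmin <= t.
  rewrite leNgt; apply/negP => /minp; rewrite -ltnS prednK //; by rewrite ltnn.
exists p; split => //; split; last by split.
set S := [set g | grid 2 2 tmin g /\ t < g].
have S0 : S (s ^+ p * tmin) by split => //; apply/grid22; exists p.
have lb : lbound S (s ^+ p * tmin).
  move=> g [/grid22 [z ->] tg].
  rewrite ler_pM2r //.
  have -> : s ^+ p = s ^ (p%:Z) by [].
  rewrite ler_eXz2l; last exact: s_gt1.
  rewrite leNgt; apply/negP => zp.
  have : s ^ z <= s ^ ((p.-1)%:Z).
    rewrite ler_eXz2l; last exact: s_gt1.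
    move: zp; rewrite -[in X in X -> _](prednK p0) -addn1 PoszD; lia.
  rewrite -(ler_pM2r t0) => h.
  by move: (le_trans h lep); rewrite leNgt tg.
apply/le_anti/andP; split.
  by apply: ge_inf => //; exists (s ^+ p * tmin).
by apply: lb_le_inf => //; exists (s ^+ p * tmin).
Qed.

Lemma mult_sub (g Delta : R) : 0 < g -> 0 <= Delta ->
  mult_set g Delta `<=` (fun k : nat => k%:R * g) @` `I_(Num.truncn (Delta / g)).+1.
Proof.
move=> g0 D0 x [k [-> kD]]; exists k => //=.
rewrite ltnS (truncn_ge_nat k (divr_ge0 D0 (ltW g0))).
by rewrite ler_pdivlMr.
Qed.

Lemma card_img (f : nat -> R) m : (#|` fset_set (f @` `I_m)| <= m)%N.
Proof.
rewrite fset_set_image ?finite_II //.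
apply: leq_trans (leq_imfset_card _ _ _) _.
by rewrite (card_fset_set (card_eqxx _)).
Qed.

Lemma count_bound (n : nat) (T : 'I_n -> R) (tmin Delta : R) :
  0 < tmin -> 0 <= Delta ->
  (forall i, exists p, (0 < p)%N /\ T i = s ^+ p * tmin) ->
  (Ncount T Delta)%:R <= Delta / (2 * tmin) + Delta / (s * tmin) + 2.
Proof.
move=> t0 D0 HT.
have s0 : 0 < s by apply: lt_trans s_gt1.
have g10 : 0 < 2 * tmin by rewrite mulr_gt0.
have g20 : 0 < s * tmin by rewrite mulr_gt0.
set N1 := (Num.truncn (Delta / (2 * tmin))).+1.
set N2 := (Num.truncn (Delta / (s * tmin))).+1.
set A1 := (fun k : nat => k%:R * (2 * tmin)) @` `I_N1.
set A2 := (fun k : nat => k%:R * (s * tmin)) @` `I_N2.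
have fA1 : finite_set A1 by apply: finite_image; exact: finite_II.
have fA2 : finite_set A2 by apply: finite_image; exact: finite_II.
have sub : \bigcup_i mult_set (T i) Delta `<=` A1 `|` A2.
  move=> x [i _ [k [xE kD]]].
  have [p [p0 Ti]] := HT i.
  rewrite Ti in xE kD.
  have hp := odd_double_half p.
  case: (boolP (odd p)) => op.
  - right; suff hm : mult_set (s * tmin) Delta x by exact: (mult_sub _ _ g20 D0 _ hm).
    exists (k * 2 ^ p./2)%N.
    have sp : s ^+ p = s * 2 ^+ p./2.
      by rewrite -{1}hp op add1n exprS -muln2 mulnC exprM s_sq.
    rewrite sp in xE kD.
    split.
      rewrite xE natrM natrX; ring.
    rewrite natrM natrX; apply: le_trans kD; rewrite le_eqVlt; apply/orP; left; apply/eqP; ring.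
  - left; suff hm : mult_set (2 * tmin) Delta x by exact: (mult_sub _ _ g10 D0 _ hm).
    have h2 : (0 < p./2)%N.
      move: p0; rewrite -{1}hp (negbTE op) add0n -muln2; lia.
    exists (k * 2 ^ (p./2).-1)%N.
    have sp : s ^+ p = 2 * 2 ^+ (p./2).-1.
      rewrite -{1}hp (negbTE op) add0n -muln2 mulnC exprM s_sq.
      by rewrite -{1}(prednK h2) exprS.
    rewrite sp in xE kD.
    split.
      rewrite xE natrM natrX; ring.
    rewrite natrM natrX; apply: le_trans kD; rewrite le_eqVlt; apply/orP; left; apply/eqP; ring.
have fU : finite_set (A1 `|` A2) by rewrite finite_setU; split.
have : (Ncount T Delta <= N1 + N2)%N.
  rewrite /Ncount.
  apply: leq_trans (_ : (#|` fset_set (A1 `|` A2)| <= _)%N).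
    apply: fsubset_leq_card.
    by rewrite -fset_set_sub //; apply: sub_finite_set sub fU.
  rewrite fset_setU //.
  apply: leq_trans (leq_card_fsetU _ _) _.
  by apply: leq_add; apply: card_img.
rewrite -(ler_nat R) => h; apply: le_trans h _.
have nS m : (m.+1)%:R = m%:R + 1 :> R by rewrite -addn1 natrD.
rewrite natrD /N1 /N2 (nS (Num.truncn _)) (nS (Num.truncn _)).
have t1 : (Num.truncn (Delta / (2 * tmin)))%:R <= Delta / (2 * tmin).
  by rewrite truncn_le divr_ge0 // ltW.
have t2 : (Num.truncn (Delta / (s * tmin)))%:R <= Delta / (s * tmin).
  by rewrite truncn_le divr_ge0 // ltW.
lra.
Qed.

Lemma J_bound (n : nat) (T : 'I_n -> R) (K0 tmin : R) :
  0 < K0 -> 0 < tmin ->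
  (forall i, exists p, (0 < p)%N /\ T i = s ^+ p * tmin) ->
  (Jcost K0 T <= (K0 * (1 / (2 * tmin) + 1 / (s * tmin)))%:E)%E.
Proof.
move=> K00 t0 HT.
set c := 1 / (2 * tmin) + 1 / (s * tmin).
rewrite /Jcost EFinM; apply: lee_wpmul2l; first by rewrite lee_fin ltW.
apply/lee_addgt0Pr => e e0.
rewrite limf_esupE.
apply: (@le_trans _ _ (ereal_sup
   ((fun Delta : R => ((Ncount T Delta)%:R / Delta)%:E) @` [set x | 2 / e < x]))).
  apply: ereal_inf_lbound; exists [set x | 2 / e < x] => //.
  by apply: nbhs_pinfty_gt; exact: num_real.
apply: ge_ereal_sup => y [x /= xM <-].
have x0 : 0 < x by apply: lt_trans xM; rewrite divr_gt0.
have ex : 2 < e * x by rewrite mulrC -ltr_pdivrMr.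
rewrite -EFinD lee_fin ler_pdivrMr //.
apply: le_trans (@count_bound n T tmin x t0 (ltW x0) HT) _.
have -> : (c + e) * x = x / (2 * tmin) + x / (s * tmin) + e * x.
  have s0 : 0 < s by apply: lt_trans s_gt1.
  by rewrite /c; field; rewrite !gt_eqF.
lra.
Qed.
End Helpers.

Theorem lemma2p3 (R : realType) (n D : nat) (K0 : R) (K H : 'I_n -> R)
  (alpha : 'I_n -> 'I_D -> R) (tmin : R) (Ts : 'I_n -> R) :
  (0 < n)%N -> (0 < D)%N -> 0 < K0 ->
  (forall i, 0 < K i) -> (forall i, 0 < H i) ->
  (forall i d, 0 <= alpha i d) ->
  is_opt_P K0 K H alpha tmin Ts ->
  let T22 := fun i => round_up 2 2 tmin (Ts i) in
  (forall i, 0 < T22 i) /\ resource_feasible alpha T22 /\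
  (Fcost K0 K H T22 <= (Num.sqrt 2 * OPT_P K0 K H alpha)%:E)%E.
Proof.
move=> _ _ K00 K0i H0 a0 [[t0 [tT rf]] opt] T22.
set s := Num.sqrt (2:R).
have s1 : 1 < s := s_gt1 R.
have s0 : 0 < s by apply: lt_trans s1.
have HR i : exists p, (0 < p)%N /\ T22 i = s ^+ p * tmin
    /\ s ^+ p.-1 * tmin <= Ts i /\ Ts i < s ^+ p * tmin.
  exact: round22 t0 (tT i).
have HT i : exists p, (0 < p)%N /\ T22 i = s ^+ p * tmin.
  by have [p [p0 [-> _]]] := HR i; exists p.
have Tsp i : 0 < Ts i by apply: lt_le_trans t0 (tT i).
have Tge i : Ts i <= T22 i.
  by have [p [_ [-> [_ /ltW]]]] := HR i.
have Tp i : 0 < T22 i by apply: lt_le_trans (Tsp i) (Tge i).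
have Tle i : T22 i <= s * Ts i.
  have [p [p0 [-> [h _]]]] := HR i.
  rewrite -(prednK p0) exprS -mulrA ler_pM2l //.
split => //; split.
  move=> d; apply: le_trans (rf d); apply: ler_sum => i _.
  apply: ler_wpM2l; first exact: a0.
  by rewrite lef_pV2 ?posrE.
have OPTE : OPT_P K0 K H alpha = objP K0 K H tmin Ts.
  have mem : [set v | exists (tmin : R) (T : 'I_n -> R),
         feasibleP alpha tmin T /\ v = objP K0 K H tmin T] (objP K0 K H tmin Ts).
    by exists tmin, Ts.
  have lb : lbound [set v | exists (tmin : R) (T : 'I_n -> R),
         feasibleP alpha tmin T /\ v = objP K0 K H tmin T] (objP K0 K H tmin Ts).
    by move=> v [t' [T' [f ->]]]; exact: opt.
  apply/le_anti/andP; split.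
    by apply: ge_inf => //; exists (objP K0 K H tmin Ts).
  by apply: lb_le_inf => //; exists (objP K0 K H tmin Ts).
rewrite OPTE /Fcost.
apply: le_trans (leeD (@J_bound R n T22 K0 tmin K00 t0 HT) (lexx _)) _.
rewrite -EFinD lee_fin /objP (mulrDr s).
apply: lerD.
  have hs : s * s = 2 by rewrite -expr2 /s sqr_sqrtr // ler0n.
  have hc : 1 / 2 + 1 / s <= s.
    have -> : 1 / s = s / (s * s) by field; rewrite gt_eqF.
    rewrite hs.
    lra.
  have -> : K0 * (1 / (2 * tmin) + 1 / (s * tmin)) = (K0 / tmin) * (1 / 2 + 1 / s).
    by field; rewrite !gt_eqF.
  rewrite [s * _]mulrC; apply: ler_wpM2l => //.
  by apply: divr_ge0; apply: ltW.
rewrite big_distrr /=; apply: ler_sum => i _.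
rewrite mulrDr; apply: lerD.
  apply: (@le_trans _ _ (K i / Ts i)).
    by apply: ler_wpM2l; [exact: ltW|rewrite lef_pV2 ?posrE].
  rewrite ler_peMl //; last exact: ltW.
  exact: (divr_ge0 (ltW (K0i i)) (ltW (Tsp i))).
apply: (@le_trans _ _ (H i * (s * Ts i))).
  by apply: ler_wpM2l; [exact: ltW|].
by rewrite mulrCA.
Qed.
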